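(* Let $(X,d)$ be a metric space and let $F$ be a semiflow on $X$ with strong compact dynamics, with strong global attractor $\mathcal G$. If $x\in\mathcal G$, $y\in X$ and $x\succcurlyeq_{\mathcal S} y$, then $y\in\mathcal G$.
   Context: A semiflow on a metric space $(X,d)$ is a continuous map $F:[0,\infty)\times X\to X$, $(t,x)\mapsto F^t(x)$, with $F^0=\mathrm{id}$ and $F^{t+s}=F^t\circ F^s$. A curve is piecewise continuous if it is continuous except at finitely many points, at which one-sided limits exist. For $T\ge1$, a piecewise continuous curve $\gamma:[0,T]\to X$ is $\varepsilon$-close to $F$ if $d(\gamma(t+\tau),F^\tau(\gamma(t)))<\varepsilon$ for every $\tau\in[0,1]$ and $t\in[0,T-\tau]$. An $\varepsilon$-chain from $x$ to $y$ is a piecewise continuous $\gamma:[0,T]\to X$, $T\ge 1$, with $\gamma(0)=x$, $\gamma(T)=y$, $\gamma$ $\varepsilon$-close to $F$. Write $x\succcurlyeq_{\mathcal S} y$ if for every $\varepsilon>0$ there is an $\varepsilon$-chain from $x$ to $y$. For $G\subset X$, $N_\varepsilon(G)=\{y: d(y,G)<\varepsilon\}$ and $W_\varepsilon(G)=\bigcup_{t\ge0}F^t(N_\varepsilon(G))$. A set $G$ attracts $K$ if for every $\varepsilon>0$ there is $T>0$ with $F^t(K)\subset N_\varepsilon(G)$ for all $t\ge T$. The global attractor $\mathcal G$ of $F$, if it exists, is a maximal invariant compact subset of $X$ attracting every compact $K\subset X$. It is strong if there is $\varepsilon>0$ such that $\mathcal G$ attracts $N_\varepsilon(\mathcal G)$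 and the map $(t,z)\mapsto F^t(z)$ is uniformly continuous on $[0,1]\times W_\varepsilon(\mathcal G)$. $F$ has strong compact dynamics if it has a strong global attractor. *)

(* Defs.v *)
From Stdlib Require Import Reals List.
Open Scope R_scope.

Section Defs.
Context {X : Type} (d : X -> X -> R).

Record metric_space : Prop := {
  d_nonneg : forall x y, 0 <= d x y;
  d_self : forall x, d x x = 0;
  d_eq : forall x y, d x y = 0 -> x = y;
  d_sym : forall x y, d x y = d y x;
  d_tri : forall x y z, d x z <= d x y + d y z }.

Definition open_set (U : X -> Prop) : Prop :=
  forall x, U x -> exists r, 0 < r /\ forall y, d x y < r -> U y.

Definition compact_set (K : X -> Prop) : Prop :=
  forall (I : Type) (U : I -> X -> Prop),
    (forall i, open_set (U i)) ->
    (forall x, K x -> exists i, U i x) ->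
    exists l : list I, forall x, K x -> exists i, In i l /\ U i x.

(* semiflow: F t x for t >= 0 (values at t < 0 are irrelevant) *)
Record semiflow (F : R -> X -> X) : Prop := {
  sf_cont : forall t x eps, 0 <= t -> 0 < eps ->
     exists delta, 0 < delta /\ forall s y, 0 <= s -> Rabs (s - t) < delta ->
       d x y < delta -> d (F s y) (F t x) < eps;
  sf_zero : forall x, F 0 x = x;
  sf_comp : forall t s x, 0 <= t -> 0 <= s -> F (t + s) x = F t (F s x) }.

Definition cont_at_within (gamma : R -> X) (T t : R) : Prop :=
  forall eps, 0 < eps -> exists delta, 0 < delta /\
    forall s, 0 <= s <= T -> Rabs (s - t) < delta -> d (gamma s) (gamma t) < eps.

Definition left_limit_exists (gamma : R -> X) (T p : R) : Prop :=
  exists L, forall eps, 0 < eps -> exists delta, 0 < delta /\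
    forall s, 0 <= s <= T -> p - delta < s < p -> d (gamma s) L < eps.

Definition right_limit_exists (gamma : R -> X) (T p : R) : Prop :=
  exists L, forall eps, 0 < eps -> exists delta, 0 < delta /\
    forall s, 0 <= s <= T -> p < s < p + delta -> d (gamma s) L < eps.

Definition piecewise_continuous (gamma : R -> X) (T : R) : Prop :=
  exists pts : list R,
    (forall t, 0 <= t <= T -> ~ In t pts -> cont_at_within gamma T t) /\
    (forall p, In p pts -> 0 <= p <= T ->
        (0 < p -> left_limit_exists gamma T p) /\
        (p < T -> right_limit_exists gamma T p)).

Definition eps_close (F : R -> X -> X) (eps : R) (gamma : R -> X) (T : R) : Prop :=
  forall tau t, 0 <= tau <= 1 -> 0 <= t <= T - tau ->
    d (gamma (t + tau)) (F tau (gamma t)) < eps.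

Definition eps_chain (F : R -> X -> X) (eps : R) (x y : X) : Prop :=
  exists (T : R) (gamma : R -> X), 1 <= T /\ piecewise_continuous gamma T /\
    gamma 0 = x /\ gamma T = y /\ eps_close F eps gamma T.

Definition chain_succ (F : R -> X -> X) (x y : X) : Prop :=
  forall eps, 0 < eps -> eps_chain F eps x y.

Definition nbhd (eps : R) (G : X -> Prop) : X -> Prop :=
  fun y => exists g, G g /\ d y g < eps.

Definition W (F : R -> X -> X) (eps : R) (G : X -> Prop) : X -> Prop :=
  fun z => exists t y, 0 <= t /\ nbhd eps G y /\ z = F t y.

Definition attracts (F : R -> X -> X) (G K : X -> Prop) : Prop :=
  forall eps, 0 < eps -> exists T, 0 < T /\
    forall t x, T <= t -> K x -> nbhd eps G (F t x).

Definition invariant (F : R -> X -> X) (G : X -> Prop) : Prop :=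
  forall t, 0 <= t -> forall y, G y <-> exists x, G x /\ y = F t x.

Definition global_attractor (F : R -> X -> X) (G : X -> Prop) : Prop :=
  invariant F G /\ compact_set G /\
  (forall K, invariant F K -> compact_set K -> forall x, K x -> G x) /\
  (forall K, compact_set K -> attracts F G K).

Definition strong_global_attractor (F : R -> X -> X) (G : X -> Prop) : Prop :=
  global_attractor F G /\
  exists eps, 0 < eps /\ attracts F G (nbhd eps G) /\
    (forall eta, 0 < eta -> exists delta, 0 < delta /\
       forall t s z w, 0 <= t <= 1 -> 0 <= s <= 1 -> W F eps G z -> W F eps G w ->
         Rabs (t - s) < delta -> d z w < delta -> d (F t z) (F s w) < eta).

End Defs.

(* Main.v *)
Require Import Defs.
From Stdlib Require Import Reals Lra Lia Classical List ZArith.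
Open Scope R_scope.

Section Aux.
Variables (X : Type) (d : X -> X -> R) (F : R -> X -> X) (G : X -> Prop) (e0 : R).
Hypothesis hm : metric_space d.
Hypothesis hs : semiflow d F.
Hypothesis huc : forall eta, 0 < eta -> exists delta, 0 < delta /\
       forall t s z w, 0 <= t <= 1 -> 0 <= s <= 1 -> W d F e0 G z -> W d F e0 G w ->
         Rabs (t - s) < delta -> d z w < delta -> d (F t z) (F s w) < eta.

Lemma seq_shadow : forall N eta, 0 < eta -> exists delta, 0 < delta /\
  forall (a : nat -> X) m, (m <= N)%nat ->
   (forall k, (k < m)%nat -> nbhd d e0 G (a k)) ->
   (forall k, (k < m)%nat -> d (a (S k)) (F 1 (a k)) < delta) ->
   d (a m) (F (INR m) (a 0%nat)) < eta.
Proof.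
  induction N as [|N IH]; intros eta Heta.
  - exists 1; split; [lra|]. intros a m Hm _ _.
    assert (m = 0%nat) by lia; subst m. simpl.
    rewrite (sf_zero _ _ hs), (d_self _ hm). lra.
  - destruct (huc (eta/2)) as [d1 [Hd1 Hu]]; [lra|].
    destruct (IH (Rmin d1 (eta/2))) as [d2 [Hd2 Hi]].
    { apply Rmin_pos; lra. }
    exists (Rmin d2 (eta/2)); split; [apply Rmin_pos; lra|].
    intros a m Hm Hn Hstep.
    assert (Hst2 : forall k, (k < m)%nat -> d (a (S k)) (F 1 (a k)) < d2).
    { intros k Hk. specialize (Hstep k Hk). pose proof (Rmin_l d2 (eta/2)). lra. }
    destruct (Nat.eq_dec m (S N)) as [->|Hne].
    + assert (HN : d (a N) (F (INR N) (a 0%nat)) < Rmin d1 (eta/2)).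
      { apply Hi; [lia| |]; intros k Hk; [apply Hn|apply Hst2]; lia. }
      assert (Heq : F (INR (S N)) (a 0%nat) = F 1 (F (INR N) (a 0%nat))).
      { rewrite S_INR, Rplus_comm. apply (sf_comp _ _ hs); [lra|apply pos_INR]. }
      rewrite Heq.
      assert (H1 : d (F 1 (a N)) (F 1 (F (INR N) (a 0%nat))) < eta/2).
      { apply Hu; try lra.
        - exists 0, (a N). repeat split; [lra| apply Hn; lia | now rewrite (sf_zero _ _ hs)].
        - exists (INR N), (a 0%nat). repeat split; [apply pos_INR| apply Hn; lia].
        - replace (1-1) with 0 by lra. rewrite Rabs_R0. lra.
        - pose proof (Rmin_l d1 (eta/2)). lra. }
      pose proof (Hstep N ltac:(lia)). pose proof (Rmin_r d2 (eta/2)).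
      pose proof (d_tri _ hm (a (S N)) (F 1 (a N)) (F 1 (F (INR N) (a 0%nat)))).
      lra.
    + pose proof (Rmin_r d1 (eta/2)).
      assert (d (a m) (F (INR m) (a 0%nat)) < Rmin d1 (eta/2)).
      { apply Hi; auto; lia. }
      lra.
Qed.
End Aux.

Lemma closed_of_compact (X : Type) (d : X -> X -> R) (K : X -> Prop) (y : X) :
  metric_space d -> compact_set d K -> (forall r, 0 < r -> nbhd d r K y) -> K y.
Proof.
  intros hm hc hn. destruct (classic (K y)) as [|Hny]; [assumption|exfalso].
  assert (Hpos : forall g, K g -> 0 < d y g).
  { intros g Kg. pose proof (d_nonneg _ hm y g). destruct (Req_dec (d y g) 0) as [E|E].
    - apply (d_eq _ hm) in E. subst. contradiction.
    - lra. }
  destruct (hc X (fun g z => K g /\ d z g < d y g / 2)) as [l Hl].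
  - intros g z [Kg Hz]. exists (d y g / 2 - d z g). split; [lra|].
    intros w Hw. split; [auto|]. pose proof (d_tri _ hm w z g). rewrite (d_sym _ hm w z) in H. lra.
  - intros g Kg. exists g. split; [auto|]. rewrite (d_self _ hm). specialize (Hpos g Kg). lra.
  - assert (Hr : exists r, 0 < r /\ forall g, In g l -> K g -> r <= d y g / 2).
    { clear Hl. induction l as [|g l IH].
      - exists 1. split; [lra|]. intros g [].
      - destruct IH as [r [Hr Hr']].
        destruct (classic (K g)) as [Kg|Kg].
        + exists (Rmin r (d y g / 2)). split.
          * apply Rmin_pos; [lra|]. specialize (Hpos g Kg). lra.
          * intros h [<-|Hh] Kh; [apply Rmin_r|].
            pose proof (Rmin_l r (d y g / 2)). specialize (Hr' h Hh Kh). lra.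
        + exists r. split; [lra|]. intros h [<-|Hh] Kh; [contradiction|auto]. }
    destruct Hr as [r [Hr Hr']].
    destruct (hn r Hr) as [g0 [Kg0 Hg0]].
    destruct (Hl g0 Kg0) as [gi [Hin [Kgi Hgi]]].
    specialize (Hr' gi Hin Kgi).
    pose proof (d_tri _ hm y g0 gi). lra.
Qed.

Theorem proposition3p1 (X : Type) (d : X -> X -> R) (F : R -> X -> X) (G : X -> Prop)
  (x y : X) :
  metric_space d -> semiflow d F -> strong_global_attractor d F G ->
  G x -> chain_succ d F x y -> G y.
Proof.
  intros hm hs [[Hinv [Hcomp _]] [e0 [He0 [Hatt Huc]]]] Gx Hch.
  apply (closed_of_compact X d G y hm Hcomp).
  assert (Main : forall rho, 0 < rho < e0 -> nbhd d rho G y).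
  2:{ intros r Hr. destruct (Main (Rmin r (e0/2))) as [g [Gg Hg]].
      - split; [apply Rmin_pos; lra|]. pose proof (Rmin_r r (e0/2)). lra.
      - exists g. split; auto. pose proof (Rmin_l r (e0/2)). lra. }
  intros rho [Hrho Hre].
  destruct (Hatt (rho/2)) as [Ta [HTa HTa']]; [lra|].
  destruct (archimed Ta) as [HA _].
  set (n := Z.to_nat (up Ta)).
  assert (Hn : Ta <= INR n).
  { unfold n. rewrite INR_IZR_INZ, Z2Nat.id; [lra|].
    apply le_IZR. lra. }
  assert (Hn0 : (0 < n)%nat).
  { destruct n; [simpl in Hn; lra| lia]. }
  destruct (seq_shadow X d F G e0 hm hs Huc (S n) (rho/2)) as [dl [Hdl Hsh]]; [lra|].
  destruct (Hch dl Hdl) as [T [gam [HT [_ [H0 [HTy Hcl]]]]]].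
  destruct (archimed T) as [HB1 HB2].
  set (M := Z.to_nat (up T - 1)).
  assert (HM : INR M = IZR (up T) - 1).
  { unfold M. rewrite INR_IZR_INZ, Z2Nat.id.
    - rewrite minus_IZR. reflexivity.
    - assert (1 < up T)%Z by (apply lt_IZR; lra). lia. }
  set (r0 := T - INR M).
  assert (Hr0 : 0 <= r0 <= 1) by (unfold r0; lra).
  set (p := fun i : nat => r0 + INR i).
  assert (Hg : G (F r0 x)) by (apply (Hinv r0 ltac:(lra)); exists x; auto).
  destruct (proj1 (Hinv 1 ltac:(lra) (F r0 x)) Hg) as [g' [Gg' Eg']].
  assert (Hstart : d (gam (p 0%nat)) (F 1 g') < dl).
  { rewrite <- Eg', <- H0. unfold p. simpl. replace (r0 + 0) with (0 + r0) by lra.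
    apply Hcl; unfold r0; pose proof (pos_INR M); lra. }
  assert (Hstep : forall i, (i < M)%nat -> d (gam (p (S i))) (F 1 (gam (p i))) < dl).
  { intros i Hi. unfold p. rewrite S_INR. replace (r0 + (INR i + 1)) with ((r0 + INR i) + 1) by lra.
    apply Hcl; [lra|]. split; [pose proof (pos_INR i); lra|].
    apply le_INR in Hi. rewrite S_INR in Hi. unfold r0. lra. }
  assert (Hall : forall j, (j <= M)%nat -> nbhd d rho G (gam (p j))).
  { intro j. induction j as [j IH] using lt_wf_ind. intros Hj.
    destruct (le_lt_dec j n) as [Hjn|Hjn].
    - set (a := fun k => match k with O => g' | S i => gam (p i) end).
      assert (Hd : d (a (S j)) (F (INR (S j)) (a 0%nat)) < rho/2).
      { apply Hsh; [lia| |].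
        - intros k Hk. destruct k as [|k]; simpl.
          + exists g'. split; auto. rewrite (d_self _ hm). lra.
          + destruct (IH k ltac:(lia) ltac:(lia)) as [g [Gg Hgg]]. exists g. split; auto. lra.
        - intros k Hk. destruct k as [|k]; simpl; [exact Hstart|]. apply Hstep; lia. }
      exists (F (INR (S j)) g'). split.
      + apply (Hinv (INR (S j)) (pos_INR _)). eauto.
      + change (a (S j)) with (gam (p j)) in Hd. change (a 0%nat) with g' in Hd. lra.
    - set (a := fun k => gam (p (j - n + k)%nat)).
      assert (Hd : d (a n) (F (INR n) (a 0%nat)) < rho/2).
      { apply Hsh; [lia| |].
        - intros k Hk. destruct (IH (j - n + k)%nat ltac:(lia) ltac:(lia)) as [g [Gg Hgg]].
          unfold a. exists g. split; auto. lra.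
        - intros k Hk. unfold a. replace (j - n + S k)%nat with (S (j - n + k)) by lia.
          apply Hstep; lia. }
      assert (Ha0 : nbhd d e0 G (a 0%nat)).
      { destruct (IH (j - n + 0)%nat ltac:(lia) ltac:(lia)) as [g [Gg Hgg]].
        unfold a. exists g. split; auto. lra. }
      destruct (HTa' (INR n) (a 0%nat) Hn Ha0) as [g [Gg Hgg]].
      exists g. split; auto. unfold a in Hd at 1. replace (j - n + n)%nat with j in Hd by lia.
      pose proof (d_tri _ hm (gam (p j)) (F (INR n) (a 0%nat)) g). lra. }
  rewrite <- HTy. replace T with (p M) by (unfold p, r0; lra). apply Hall. lia.
Qed.
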